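(* Let $p\ge 2$ and $\varphi\in\mathbb{C}^{p-1}\setminus\Omega$. Then $\dim Z^2_{0}(F_\varphi,F_\varphi)=4p^2-8p+5$.
   Context: Let $p\ge 2$ and $\varphi=(\varphi_1,\dots,\varphi_{p-1})\in\mathbb{C}^{p-1}$. $F_\varphi$ denotes the $2p$-dimensional complex Lie algebra with basis $X_1,\dots,X_{2p}$ whose nonzero brackets (up to antisymmetry) are $[X_1,X_2]=X_1$, $[X_2,X_{2k+1}]=\varphi_kX_{2k+1}$, $[X_2,X_{2k+2}]=-(1+\varphi_k)X_{2k+2}$, $[X_{2k+1},X_{2k+2}]=X_1$ for $1\le k\le p-1$. It is graded by $(F_\varphi)_0=\mathbb{C}X_2$, $(F_\varphi)_1=\operatorname{span}\{X_3,\dots,X_{2p}\}$, $(F_\varphi)_2=\mathbb{C}X_1$. A $2$-cochain $\psi$ is homogeneous of degree $k$ if $\psi((F_\varphi)_i,(F_\varphi)_j)\subset(F_\varphi)_{i+j+k}$; $Z^2_k(F_\varphi,F_\varphi)$ denotes the space of homogeneous degree-$k$ $2$-cocycles of the Chevalley–Eilenberg complex with adjoint coefficients. $\Omega=\Omega_1\cup\Omega_2\subset\mathbb{C}^{p-1}$, where $\Omega_1$ is the union of the hyperplanes $\{1+\varphi_i+\varphi_j=0\}$, $\{2+\varphi_i+\varphi_j=0\}$ ($1\le i,j\le p-1$), $\{\varphi_i-\varphi_j=0\}$ ($i\ne j$), $\{\varphi_i=0\}$, $\{\varphi_i+1=0\}$, $\{2\varphi_i+1=0\}$, and $\Omega_2$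 is the union of $\{1+\varphi_i-\varphi_j=0\}$, $\{\varphi_i+\varphi_j=0\}$, $\{2+\varphi_i=0\}$, $\{1-\varphi_i=0\}$, $\{1+2\varphi_i-\varphi_j=0\}$, $\{1+2\varphi_i+\varphi_j=0\}$, $\{2\varphi_i-\varphi_j=0\}$, $\{2+2\varphi_i+\varphi_j=0\}$ ($1\le i,j\le p-1$). *)

(* Defs.v *)
(* The ground field C is modelled as R[i] (complex numbers
   over an arbitrary realType R, a complete archimedean ordered field;
   hence R[i] is the field of complex numbers). *)
From HB Require Import structures.
From mathcomp Require Import all_boot all_algebra.
From mathcomp Require Import reals complex.
Set Implicit Arguments. Unset Strict Implicit. Unset Printing Implicit Defensive.
Import GRing.Theory.
Local Open Scope ring_scope.

Section Falg.
Variable C : fieldType.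
Variable p : nat.
(* phi = (phi_1, ..., phi_{p-1}); phi_k is  phi (k-1). *)
Variable phi : 'I_p.-1 -> C.

(* dimension of F_phi: (2*(p-1)).+2 = 2p  for p >= 1 (written as a successor
   so that the index type has an explicit 0). *)
Definition dimF := (2 * p.-1).+2.

(* Vectors of F_phi are row vectors of coordinates in the basis
   X_1, ..., X_{2p}; the basis vector X_{m+1} is indexed by m : 'I_dimF
   (0-based), i.e. X_1 <-> 0, X_2 <-> 1, X_{2k+1} <-> 2k, X_{2k+2} <-> 2k+1. *)
Definition vecF := 'rV[C]_dimF.
Definition X (m : 'I_dimF) : vecF := delta_mx 0 m.

(* phi_k for k : nat, meaningful for 1 <= k <= p-1 *)
Definition phin (k : nat) : C :=
  match (insub k.-1 : option 'I_p.-1) with Some i => phi i | None => 0 end.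

(* Brackets [X_{i+1}, X_{j+1}] for 0-based i < j:
   [X_1,X_2] = X_1,
   [X_2,X_{2k+1}] = phi_k X_{2k+1},  [X_2,X_{2k+2}] = -(1+phi_k) X_{2k+2},
   [X_{2k+1},X_{2k+2}] = X_1   (1 <= k <= p-1); all other brackets zero. *)
Definition br_lt (i j : 'I_dimF) : vecF :=
  if (i == 0%N :> nat) && (j == 1%N :> nat) then X ord0
  else if (i == 1%N :> nat) && (2 <= j)%N then
    (if odd j then - (1 + phin j./2) else phin j./2) *: X j
  else if [&& (2 <= i)%N, ~~ odd i & (j == i.+1 :> nat)] then X ord0
  else 0.

Definition brX (i j : 'I_dimF) : vecF :=
  if (i < j)%N then br_lt i j else if (j < i)%N then - br_lt j i else 0.

Definition brF (x y : vecF) : vecF :=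
  \sum_(i < dimF) \sum_(j < dimF) (x 0 i * y 0 j) *: brX i j.

(* 2-cochains with adjoint coefficients: bilinear maps F x F -> F, given by
   their values psi(X_i, X_j) on pairs of basis vectors. *)
Definition cochain2 := {ffun 'I_dimF * 'I_dimF -> vecF}.

Definition ev2 (psi : cochain2) (x y : vecF) : vecF :=
  \sum_(i < dimF) \sum_(j < dimF) (x 0 i * y 0 j) *: psi (i, j).

(* grading: (F)_0 = C X_2, (F)_1 = span(X_3..X_{2p}), (F)_2 = C X_1 *)
Definition degX (m : 'I_dimF) : nat :=
  if (m == 0%N :> nat) then 2%N else if (m == 1%N :> nat) then 0%N else 1%N.

Definition in_grade (a : nat) (x : vecF) : Prop :=
  forall m : 'I_dimF, degX m != a -> x 0 m = 0.

Definition alternating (psi : cochain2) : Prop :=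
  forall x : vecF, ev2 psi x x = 0.

(* homogeneous of degree k (here only k = 0 is used; k is a nat so that
   the degree-0 case is literally psi(F_i, F_j) in F_{i+j}) *)
Definition homogeneous (k : nat) (psi : cochain2) : Prop :=
  forall (a b : nat) (x y : vecF),
    in_grade a x -> in_grade b y -> in_grade (a + b + k) (ev2 psi x y).

Definition d2 (psi : cochain2) (x y z : vecF) : vecF :=
  brF x (ev2 psi y z) - brF y (ev2 psi x z) + brF z (ev2 psi x y)
  - ev2 psi (brF x y) z + ev2 psi (brF x z) y - ev2 psi (brF y z) x.

Definition is_cocycle (psi : cochain2) : Prop :=
  forall x y z : vecF, d2 psi x y z = 0.

Definition in_Z2_0 (psi : cochain2) : Prop :=
  [/\ alternating psi, homogeneous 0 psi & is_cocycle psi].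

End Falg.

(* phi lies outside the exceptional set Omega = Omega_1 \cup Omega_2
   (indices i, j range over 1..p-1, i.e. over 'I_p.-1) *)
Definition notin_Omega (C : fieldType) (p : nat) (phi : 'I_p.-1 -> C) : Prop :=
  (forall i j : 'I_p.-1, 1 + phi i + phi j != 0) /\
  (forall i j : 'I_p.-1, 2%:R + phi i + phi j != 0) /\
  (forall i j : 'I_p.-1, i != j -> phi i - phi j != 0) /\
  (forall i : 'I_p.-1, phi i != 0) /\
  (forall i : 'I_p.-1, phi i + 1 != 0) /\
  (forall i : 'I_p.-1, 2%:R * phi i + 1 != 0) /\
  (forall i j : 'I_p.-1, 1 + phi i - phi j != 0) /\
  (forall i j : 'I_p.-1, phi i + phi j != 0) /\
  (forall i : 'I_p.-1, 2%:R + phi i != 0) /\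
  (forall i : 'I_p.-1, 1 - phi i != 0) /\
  (forall i j : 'I_p.-1, 1 + 2%:R * phi i - phi j != 0) /\
  (forall i j : 'I_p.-1, 1 + 2%:R * phi i + phi j != 0) /\
  (forall i j : 'I_p.-1, 2%:R * phi i - phi j != 0) /\
  (forall i j : 'I_p.-1, 2%:R + 2%:R * phi i + phi j != 0).

(* Main.v *)
Require Import Defs.
From HB Require Import structures.
From mathcomp Require Import all_boot all_algebra.
From mathcomp Require Import reals complex.
From mathcomp Require Import ring zify.
Import GRing.Theory Num.Theory.
Local Open Scope ring_scope.

Set Implicit Arguments. Unset Strict Implicit. Unset Printing Implicit Defensive.

Section Gen.
Variable C : numFieldType.
Variable p : nat.
Variable phi : 'I_p.-1 -> C.
Local Notation n := (dimF p).
Local Notation vec := (vecF C p).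
Local Notation coch := (cochain2 C p).

Definition i0 : 'I_n := ord0.
Definition i1 : 'I_n := @Ordinal n 1 isT.

Lemma Xe (m l : 'I_n) : X C m 0 l = (m == l)%:R.
Proof. by rewrite /X mxE eqxx eq_sym. Qed.

Lemma ev2_Xl (psi : coch) i y : ev2 psi (X C i) y = \sum_j y 0 j *: psi (i, j).
Proof.
rewrite /ev2 (bigD1 i) //= [X in _ + X]big1 => [|k nki]; last first.
  by apply: big1 => j _; rewrite Xe eq_sym (negbTE nki) mul0r scale0r.
rewrite addr0; apply: eq_bigr => j _; by rewrite Xe eqxx mul1r.
Qed.

Lemma ev2_Xr (psi : coch) x j : ev2 psi x (X C j) = \sum_i x 0 i *: psi (i, j).
Proof.
rewrite /ev2; apply: eq_bigr => i _.
rewrite (bigD1 j) //= [X in _ + X]big1 => [|k nkj]; last by rewrite Xe eq_sym (negbTE nkj) mulr0 scale0r.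
by rewrite Xe eqxx mulr1 addr0.
Qed.

Lemma ev2_XX (psi : coch) i j : ev2 psi (X C i) (X C j) = psi (i, j).
Proof.
rewrite ev2_Xl (bigD1 j) //= [X in _ + X]big1 => [|k nkj]; last by rewrite Xe eq_sym (negbTE nkj) scale0r.
by rewrite Xe eqxx scale1r addr0.
Qed.

Lemma ev2L (psi : coch) a x x' y :
  ev2 psi (a *: x + x') y = a *: ev2 psi x y + ev2 psi x' y.
Proof.
rewrite /ev2 scaler_sumr -big_split; apply: eq_bigr => i _.
rewrite scaler_sumr -big_split; apply: eq_bigr => j _.
by rewrite !mxE /= scalerA -scalerDl mulrDl mulrA.
Qed.

Lemma ev2R (psi : coch) a x y y' :
  ev2 psi x (a *: y + y') = a *: ev2 psi x y + ev2 psi x y'.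
Proof.
rewrite /ev2 scaler_sumr -big_split; apply: eq_bigr => i _.
rewrite scaler_sumr -big_split; apply: eq_bigr => j _.
rewrite !mxE /= scalerA -scalerDl; congr (_ *: _); ring.
Qed.

Lemma ev2P (psi psi' : coch) a x y :
  ev2 (a *: psi + psi') x y = a *: ev2 psi x y + ev2 psi' x y.
Proof.
rewrite /ev2 scaler_sumr -big_split; apply: eq_bigr => i _.
rewrite scaler_sumr -big_split; apply: eq_bigr => j _.
by rewrite /= !ffunE scalerDr !scalerA mulrC.
Qed.

Lemma ev2_0l (psi : coch) y : ev2 psi 0 y = 0.
Proof. by rewrite /ev2 big1 // => i _; rewrite big1 // => j _; rewrite mxE mul0r scale0r. Qed.
Lemma ev2_0r (psi : coch) x : ev2 psi x 0 = 0.
Proof. by rewrite /ev2 big1 // => i _; rewrite big1 // => j _; rewrite mxE mulr0 scale0r. Qed.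

Lemma ev2Nl (psi : coch) x y : ev2 psi (- x) y = - ev2 psi x y.
Proof. by rewrite -[- x]addr0 -scaleN1r ev2L ev2_0l addr0 scaleN1r. Qed.
Lemma ev2Nr (psi : coch) x y : ev2 psi x (- y) = - ev2 psi x y.
Proof. by rewrite -[- y]addr0 -scaleN1r ev2R ev2_0r addr0 scaleN1r. Qed.
Lemma ev2Zl (psi : coch) a x y : ev2 psi (a *: x) y = a *: ev2 psi x y.
Proof. by rewrite -[a *: x]addr0 ev2L ev2_0l addr0. Qed.

Lemma ev2_anti (psi : coch) : (forall i j, psi (j, i) = - psi (i, j)) ->
  forall x y, ev2 psi y x = - ev2 psi x y.
Proof.
move=> H x y; rewrite /ev2 exchange_big -sumrN; apply: eq_bigr => j _.
rewrite -sumrN; apply: eq_bigr => i _; rewrite H scalerN mulrC //.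
Qed.

Lemma lin_sum (V W : lmodType C) (f : V -> W)
  (hf : forall a u v, f (a *: u + v) = a *: f u + f v)
  (I : Type) (r : seq I) (F : I -> V) (a : I -> C) :
  f (\sum_(i <- r) a i *: F i) = \sum_(i <- r) a i *: f (F i).
Proof.
have f0 : f 0 = 0.
  by have := hf (-1) 0 0; rewrite scaler0 addr0 scaleN1r addNr.
elim: r => [|x r IH]; first by rewrite !big_nil.
by rewrite !big_cons hf IH.
Qed.

Lemma vec_dec (x : vec) : x = \sum_i x 0 i *: X C i.
Proof. exact: row_sum_delta. Qed.

Definition Bc : coch := [ffun ij => brX phi ij.1 ij.2].

Lemma brFE x y : brF phi x y = ev2 Bc x y.
Proof. by rewrite /brF /ev2; apply: eq_bigr => i _; apply: eq_bigr => j _; rewrite ffunE. Qed.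


Lemma brX_anti i j : brX phi j i = - brX phi i j.
Proof. by rewrite /brX; case: ltngtP => //; rewrite ?opprK ?oppr0. Qed.

Lemma Bc_anti i j : Bc (j, i) = - Bc (i, j).
Proof. by rewrite !ffunE /= brX_anti. Qed.

Lemma d2E (psi : coch) x y z : d2 phi psi x y z =
  ev2 Bc x (ev2 psi y z) - ev2 Bc y (ev2 psi x z) + ev2 Bc z (ev2 psi x y)
  - ev2 psi (ev2 Bc x y) z + ev2 psi (ev2 Bc x z) y - ev2 psi (ev2 Bc y z) x.
Proof. by rewrite /d2 !brFE. Qed.

Lemma d2L1 (psi : coch) a x x' y z :
  d2 phi psi (a *: x + x') y z = a *: d2 phi psi x y z + d2 phi psi x' y z.
Proof. rewrite !d2E !(ev2L, ev2R); apply/rowP => m; rewrite !mxE; ring. Qed.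
Lemma d2L2 (psi : coch) a x y y' z :
  d2 phi psi x (a *: y + y') z = a *: d2 phi psi x y z + d2 phi psi x y' z.
Proof. rewrite !d2E !(ev2L, ev2R); apply/rowP => m; rewrite !mxE; ring. Qed.
Lemma d2L3 (psi : coch) a x y z z' :
  d2 phi psi x y (a *: z + z') = a *: d2 phi psi x y z + d2 phi psi x y z'.
Proof. rewrite !d2E !(ev2L, ev2R); apply/rowP => m; rewrite !mxE; ring. Qed.
Lemma d2P (psi psi' : coch) a x y z :
  d2 phi (a *: psi + psi') x y z = a *: d2 phi psi x y z + d2 phi psi' x y z.
Proof. rewrite !d2E !(ev2P, ev2R); apply/rowP => m; rewrite !mxE; ring. Qed.

Lemma cocycle_basis (psi : coch) :
  (forall i j k, d2 phi psi (X C i) (X C j) (X C k) = 0) -> is_cocycle phi psi.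
Proof.
move=> H x y z.
rewrite (vec_dec x) (lin_sum (f := fun x => d2 phi psi x y z)); last by move=> *; rewrite /= d2L1.
apply: big1 => i _.
rewrite (vec_dec y) (lin_sum (f := fun y => d2 phi psi (X C i) y z)); last by move=> *; rewrite /= d2L2.
rewrite big1 ?scaler0 // => j _.
rewrite (vec_dec z) (lin_sum (f := fun z => d2 phi psi (X C i) (X C j) z)); last by move=> *; rewrite /= d2L3.
by rewrite big1 ?scaler0 // => k _; rewrite H scaler0.
Qed.

Lemma d2_swap12 (psi : coch) : (forall i j, psi (j, i) = - psi (i, j)) ->
  forall x y z, d2 phi psi y x z = - d2 phi psi x y z.
Proof.
move=> H x y z; rewrite !d2E.
rewrite (ev2_anti H x y) (ev2_anti Bc_anti x y) ev2Nr ev2Nl.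
apply/rowP => m; rewrite !mxE; ring.
Qed.

Lemma d2_swap23 (psi : coch) : (forall i j, psi (j, i) = - psi (i, j)) ->
  forall x y z, d2 phi psi x z y = - d2 phi psi x y z.
Proof.
move=> H x y z; rewrite !d2E.
rewrite (ev2_anti H y z) (ev2_anti Bc_anti y z) ev2Nr ev2Nl.
apply/rowP => m; rewrite !mxE; ring.
Qed.

Lemma vec_selfneg (v : vec) : v = - v -> v = 0.
Proof.
move=> H; apply/rowP => m; have := congr1 (fun w : vec => w 0 m) H.
rewrite !mxE => /eqP; rewrite -subr_eq0 opprK -mulr2n mulrn_eq0 /= => /eqP //.
Qed.

Lemma cocycle_sorted (psi : coch) : (forall i j, psi (j, i) = - psi (i, j)) ->
  (forall i j k : 'I_n, (i < j)%N -> (j < k)%N -> d2 phi psi (X C i) (X C j) (X C k) = 0) ->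
  is_cocycle phi psi.
Proof.
move=> Ha H; apply: cocycle_basis.
have S12 := d2_swap12 Ha; have S23 := d2_swap23 Ha.
have E : forall x y z, d2 phi psi y x z = 0 -> d2 phi psi x y z = 0.
  by move=> x y z H1; rewrite (S12 y x z) H1 oppr0.
have F : forall x y z, d2 phi psi x z y = 0 -> d2 phi psi x y z = 0.
  by move=> x y z H1; rewrite (S23 x z y) H1 oppr0.
have D1 : forall x z, d2 phi psi x x z = 0.
  by move=> x z; apply: vec_selfneg; rewrite {1}S12.
have D2 : forall x z, d2 phi psi x z z = 0.
  by move=> x z; apply: vec_selfneg; rewrite {1}S23.
move=> i j k.
case: (ltngtP i j) => [ij|ji|/val_inj ->]; last exact: D1.
- case: (ltngtP j k) => [jk|kj|/val_inj ->]; last exact: D2.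
  + exact: H.
  + case: (ltngtP i k) => [ik|ki|/val_inj ->].
    * by apply: (F); apply: H.
    * by apply: (F); apply: (E); apply: H.
    * by apply: (F); apply: D1.
- case: (ltngtP i k) => [ik|ki|/val_inj ->].
  + by apply: (E); apply: H.
  + case: (ltngtP j k) => [jk|kj|/val_inj ->].
    * by apply: (E); apply: (F); apply: H.
    * by apply: (E); apply: (F); apply: (E); apply: H.
    * exact: D2.
  + by apply: (E); apply: D2.
Qed.


Definition lam (u : nat) : C := if odd u then -(1 + phin phi u./2) else phin phi u./2.
Definition om (u l : nat) : C := if odd u then - (l == u.-1)%:R else (l == u.+1)%:R.

Lemma B0 (j : 'I_n) : brX phi i0 j = ((j:nat) == 1)%:R *: X C i0.
Proof.
case: j => [[|[|j]] Hj]; rewrite /brX /br_lt /= ?scale0r ?scale1r //.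
Qed.

Lemma B1 (j : 'I_n) : brX phi i1 j =
  if (j:nat) == 0 then - X C i0 else if (j:nat) == 1 then 0 else lam j *: X C j.
Proof.
case: j => [[|[|j]] Hj]; rewrite /brX /br_lt /= //.
Qed.

Lemma B2 (u j : 'I_n) : (2 <= u)%N -> (j:nat) != 1 -> brX phi u j = om u j *: X C i0.
Proof.
move=> Hu Hj1.
have [j0|j2] : (j:nat) = 0%N \/ (2 <= j)%N by lia.
  rewrite /brX /br_lt j0.
  have -> : (u < 0)%N = false by lia.
  have -> : (0 < u)%N = true by lia.
  have -> : (u == 1 :> nat) = false by apply/eqP; lia.
  rewrite /om /=.
  have -> : (0 == u.-1 :> nat) = false by apply/eqP; lia.
  by case: (odd u); rewrite ?oppr0 scale0r ?oppr0.
rewrite /brX /br_lt.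
have -> : (u == 0 :> nat) = false by apply/eqP; lia.
have -> : (u == 1 :> nat) = false by apply/eqP; lia.
have -> : (j == 0 :> nat) = false by apply/eqP; lia.
have -> : (j == 1 :> nat) = false by apply/eqP; lia.
rewrite Hu j2 /= /om.
case: ltngtP => [uj|ju|/val_inj uj].
- case Ou: (odd u).
  + have -> : (j == u.-1 :> nat) = false by apply/eqP; lia.
    by rewrite oppr0 scale0r.
  + by case: eqP => _; rewrite ?scale1r ?scale0r.
- have -> : (j == u.+1 :> nat) = false by apply/eqP; lia.
  have E1 : (u == j.+1 :> nat) = (j == u.-1 :> nat) by apply/eqP/eqP; lia.
  rewrite E1.
  case Ou: (odd u).
  + case: eqP => [ju1|_]; last by rewrite andbF /= ?mulr0n ?oppr0 ?scale0r.
    have -> : odd j = false.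
      have uS : (u:nat) = j.+1 by lia.
      by move: Ou; rewrite uS /= => /negbTE.
    by rewrite /= ?mulr1n scaleNr scale1r.
  + case: eqP => [ju1|_]; last by rewrite andbF /= ?mulr0n ?oppr0 ?scale0r.
    have -> : odd j = true.
      have uS : (u:nat) = j.+1 by lia.
      by move: Ou; rewrite uS /= => /negbFE.
    by rewrite /= ?mulr0n ?oppr0 ?scale0r.
- subst j.
  have -> : (u == u.-1 :> nat) = false by apply/eqP; lia.
  have -> : (u == u.+1 :> nat) = false by apply/eqP; lia.
  by case: (odd u); rewrite /= ?mulr0n ?oppr0 ?scale0r.
Qed.

Lemma B2' (u : 'I_n) : (2 <= u)%N -> brX phi u i1 = - (lam u *: X C u).
Proof.
move=> Hu; rewrite /brX /br_lt /=.
have -> : (u < 1)%N = false by lia.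
have -> : (1 < u)%N = true by lia.
by [].
Qed.


Definition homc (psi : coch) :=
  forall i j m : 'I_n, degX m != (degX i + degX j)%N -> psi (i, j) 0 m = 0.
Definition antis (psi : coch) := forall i j, psi (j, i) = - psi (i, j).

Lemma degX0 : degX i0 = 2%N. Proof. by []. Qed.
Lemma degX1 : degX i1 = 0%N. Proof. by []. Qed.
Lemma degX2 (m : 'I_n) : (2 <= m)%N -> degX m = 1%N.
Proof.
move=> Hm; rewrite /degX.
have -> : (m == 0 :> nat) = false by apply/eqP; lia.
have -> : (m == 1 :> nat) = false by apply/eqP; lia.
by [].
Qed.
Lemma ord_cases (m : 'I_n) : m = i0 \/ m = i1 \/ (2 <= m)%N.
Proof.
have [H|[H|H]] : (m:nat) = 0%N \/ (m:nat) = 1%N \/ (2 <= m)%N by lia.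
- by left; apply/val_inj.
- by right; left; apply/val_inj.
- by right; right.
Qed.

Lemma Xgrade (m : 'I_n) : in_grade (degX m) (X C m).
Proof. move=> l; rewrite Xe; case: (eqVneq m l) => [->|ne]; [by rewrite eqxx | by []]. Qed.

Lemma degX_le (m : 'I_n) : (degX m <= 2)%N.
Proof. by rewrite /degX; case: ifP => _ //; case: ifP. Qed.

Lemma in_grade_big a (x : vec) : (3 <= a)%N -> in_grade a x -> x = 0.
Proof.
move=> Ha Hx; apply/rowP => m; rewrite mxE; apply: Hx.
apply/negP => /eqP E; move: (degX_le m); rewrite E; lia.
Qed.

Lemma in_gradeD a (x y : vec) : in_grade a x -> in_grade a y -> in_grade a (x + y).
Proof. by move=> Hx Hy m Hm; rewrite mxE Hx // Hy // addr0. Qed.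
Lemma in_gradeN a (x : vec) : in_grade a x -> in_grade a (- x).
Proof. by move=> Hx m Hm; rewrite mxE Hx // oppr0. Qed.
Lemma in_gradeB a (x y : vec) : in_grade a x -> in_grade a y -> in_grade a (x - y).
Proof. by move=> Hx Hy; apply: in_gradeD => //; apply: in_gradeN. Qed.

Lemma ev2_grade (psi : coch) a b c x y : homc psi -> in_grade a x -> in_grade b y ->
  (a + b)%N = c -> in_grade c (ev2 psi x y).
Proof.
move=> H Hx Hy <- m Hm; rewrite /ev2 summxE big1 // => i _; rewrite summxE big1 // => j _.
rewrite mxE; case: (eqVneq (degX i) a) => [Ei|Ni]; last by rewrite Hx // !mul0r.
case: (eqVneq (degX j) b) => [Ej|Nj]; last by rewrite (Hy j) // mulr0 mul0r.
by rewrite H ?mulr0 // Ei Ej.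
Qed.

Lemma scX_coord a (k m : 'I_n) : (a *: X C k) 0 m = a * (k == m)%:R.
Proof. by rewrite mxE Xe. Qed.

Lemma om_u0 (u : nat) : (2 <= u)%N -> om u 0 = 0.
Proof.
move=> Hu; rewrite /om.
have -> : (0 == u.-1 :> nat) = false by apply/eqP; lia.
by case: (odd u); rewrite ?oppr0.
Qed.

Lemma Bc_hom : homc Bc.
Proof.
move=> i j m; rewrite ffunE /=.
have [->|[->|Hi]] := ord_cases i.
- move=> Hm; rewrite B0 scX_coord; case: (eqVneq i0 m) => [Em|]; last by rewrite /= ?mulr0n mulr0.
  case: (eqVneq (j:nat) 1) => [j1|j1]; last by rewrite /= ?mulr0n mul0r.
  by move: Hm; rewrite -Em /degX j1.
- rewrite B1; have [->|[->|Hj]] := ord_cases j.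
  + move=> Hm; rewrite /= mxE Xe; case: (eqVneq i0 m) => [Em|]; last by rewrite /= ?mulr0n oppr0.
    by move: Hm; rewrite -Em.
  + by rewrite /= mxE.
  + move=> Hm.
    have -> : (j == 0 :> nat) = false by apply/eqP; lia.
    have -> : (j == 1 :> nat) = false by apply/eqP; lia.
    rewrite scX_coord; case: (eqVneq j m) => [Em|]; last by rewrite /= ?mulr0n mulr0.
    by move: Hm; rewrite -Em degX1 add0n eqxx.
- have [->|Hj1] := eqVneq j i1.
    move=> Hm; rewrite B2' // mxE scX_coord; case: (eqVneq i m) => [Em|]; last by rewrite /= ?mulr0n mulr0 oppr0.
    by move: Hm; rewrite -Em degX1 addn0 eqxx.
  have Hj1' : (j:nat) != 1%N.
    by apply/eqP => E; move: Hj1; have -> : j = i1 by apply/val_inj.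
  rewrite B2 //.
  move=> Hm; rewrite scX_coord; case: (eqVneq i0 m) => [Em|]; last by rewrite /= ?mulr0n mulr0.
  have [j0|[j1|Hj]] := ord_cases j.
  + by rewrite j0 om_u0 // mul0r.
  + by rewrite j1 eqxx in Hj1.
  + by move: Hm; rewrite -Em degX0 (degX2 Hi) (degX2 Hj).
Qed.

Lemma d2_grade (psi : coch) a b c x y z : homc psi ->
  in_grade a x -> in_grade b y -> in_grade c z ->
  in_grade (a + b + c) (d2 phi psi x y z).
Proof.
move=> H Hx Hy Hz; rewrite d2E.
have G := ev2_grade; have BH := Bc_hom.
repeat apply: in_gradeB || apply: in_gradeD.
- apply: (G _ a (b + c)) => //; try lia; exact: (G _ b c).
- apply: (G _ b (a + c)) => //; try lia; exact: (G _ a c).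
- apply: (G _ c (a + b)) => //; try lia; exact: (G _ a b).
- apply: (G _ (a + b) c) => //; try lia; exact: (G _ a b).
- apply: (G _ (a + c) b) => //; try lia; exact: (G _ a c).
- apply: (G _ (b + c) a) => //; try lia; exact: (G _ b c).
Qed.

Lemma cocycle_crit (psi : coch) : antis psi -> homc psi ->
  (forall u w : 'I_n, (2 <= u)%N -> (u < w)%N -> d2 phi psi (X C i1) (X C u) (X C w) 0 i0 = 0) ->
  is_cocycle phi psi.
Proof.
move=> Ha Hh H; apply: cocycle_sorted => // i j k ij jk.
have G := d2_grade Hh (Xgrade (m:=i)) (Xgrade (m:=j)) (Xgrade (m:=k)).
have Hj : (1 <= j)%N by lia.
have Hk : (2 <= k)%N by lia.
have [Ei|[Ei|Hi]] := ord_cases i.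
- apply: in_grade_big G; rewrite Ei degX0 (degX2 Hk); lia.
- subst i; have Hj2 : (2 <= j)%N by move: ij; rewrite /=; lia.
  apply/rowP => m; rewrite [RHS]mxE.
  have [Em|[Em|Hm]] := ord_cases m.
  + by rewrite Em; apply: H.
  + by apply: G; rewrite Em degX1 (degX2 Hj2) (degX2 Hk).
  + by apply: G; rewrite (degX2 Hm) degX1 (degX2 Hj2) (degX2 Hk).
- apply: in_grade_big G; rewrite (degX2 Hi) (degX2 (leq_trans Hi (ltnW ij))) (degX2 Hk); lia.
Qed.


Lemma B1u (u : 'I_n) : (2 <= u)%N -> brX phi i1 u = lam u *: X C u.
Proof.
move=> Hu; rewrite B1.
have -> : (u == 0 :> nat) = false by apply/eqP; lia.
by have -> : (u == 1 :> nat) = false by apply/eqP; lia.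
Qed.

Lemma B1c (l : 'I_n) : brX phi i1 l 0 i0 = - (l == i0)%:R.
Proof.
rewrite B1; have [->|[->|Hl]] := ord_cases l.
- by rewrite /= mxE Xe.
- by rewrite /= mxE oppr0.
- have -> : (l == 0 :> nat) = false by apply/eqP; lia.
  have -> : (l == 1 :> nat) = false by apply/eqP; lia.
  have Hn : (l == i0) = false by apply/eqP => E; move: Hl; rewrite E.
  by rewrite scX_coord Hn /= mulr0 oppr0.
Qed.

Lemma om_u1 (u : nat) : (2 <= u)%N -> om u 1 = 0.
Proof.
move=> Hu; rewrite /om; case Ou: (odd u).
- have -> : (1 == u.-1 :> nat) = false.
    apply/eqP => E; have u2 : u = 2%N by lia.
    by rewrite u2 in Ou.
  by rewrite oppr0.
- by have -> : (1 == u.+1 :> nat) = false by apply/eqP; lia.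
Qed.

Lemma B2c (u l : 'I_n) : (2 <= u)%N -> brX phi u l 0 i0 = om u l.
Proof.
move=> Hu; have [->|Hl] := eqVneq l i1.
  rewrite B2' // mxE scX_coord.
  have -> : (u == i0) = false by apply/eqP => E; move: Hu; rewrite E.
  by rewrite mulr0 oppr0 om_u1.
have Hl' : (l:nat) != 1%N by apply/eqP => E; move: Hl; have -> : l = i1 by apply/val_inj.
rewrite B2 //.
by rewrite scX_coord eqxx mulr1.
Qed.

Lemma coordB (i m : 'I_n) y : (ev2 Bc (X C i) y) 0 m = \sum_j y 0 j * brX phi i j 0 m.
Proof.
rewrite ev2_Xl summxE; apply: eq_bigr => j _; by rewrite mxE ffunE.
Qed.

Lemma d2_formula (psi : coch) (u w : 'I_n) : (2 <= u)%N -> (2 <= w)%N ->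
  d2 phi psi (X C i1) (X C u) (X C w) 0 i0 =
  - psi (u, w) 0 i0 - (\sum_l psi (i1, w) 0 l * om u l)
  + (\sum_l psi (i1, u) 0 l * om w l)
  - lam u * psi (u, w) 0 i0 + lam w * psi (w, u) 0 i0 - om u w * psi (i0, i1) 0 i0.
Proof.
move=> Hu Hw.
have Hw1 : (w:nat) != 1%N by apply/eqP => E; move: Hw; rewrite E.
rewrite d2E !ev2_XX !ffunE /= (B1u Hu) (B1u Hw) (B2 Hu Hw1) !ev2Zl !ev2_XX.
rewrite !mxE !coordB.
have S1 : \sum_j psi (u, w) 0 j * brX phi i1 j 0 i0 = - psi (u, w) 0 i0.
  rewrite (bigD1 i0) //= big1 => [|j nj]; last by rewrite B1c (negbTE nj) /= oppr0 mulr0.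
  by rewrite B1c eqxx /= mulrN1 addr0.
have S2 : forall a b : 'I_n, (2 <= a)%N -> \sum_j psi (i1, b) 0 j * brX phi a j 0 i0 = \sum_j psi (i1, b) 0 j * om a j.
  by move=> a b Ha; apply: eq_bigr => j _; rewrite B2c.
rewrite S1 (S2 _ _ Hu) (S2 _ _ Hw).
by [].
Qed.


Lemma ev2Dl (psi : coch) x x' y : ev2 psi (x + x') y = ev2 psi x y + ev2 psi x' y.
Proof. by have := ev2L psi 1 x x' y; rewrite !scale1r. Qed.
Lemma ev2Dr (psi : coch) x y y' : ev2 psi x (y + y') = ev2 psi x y + ev2 psi x y'.
Proof. by have := ev2R psi 1 x y y'; rewrite !scale1r. Qed.

Lemma alt_antis (psi : coch) : alternating psi -> antis psi.
Proof.
move=> H i j; have := H (X C i + X C j).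
rewrite ev2Dl !ev2Dr !ev2_XX.
have := H (X C i); have := H (X C j); rewrite !ev2_XX => -> ->.
rewrite add0r addr0 => /eqP; rewrite addr_eq0 => /eqP ->.
by rewrite opprK.
Qed.

Lemma antis_alt (psi : coch) : antis psi -> alternating psi.
Proof. by move=> H x; apply: vec_selfneg; rewrite {1}(ev2_anti H x x). Qed.

Lemma hom_homc (psi : coch) : homogeneous 0 psi -> homc psi.
Proof.
move=> H i j m Hm.
have := H (degX i) (degX j) (X C i) (X C j) (Xgrade (m:=i)) (Xgrade (m:=j)).
by rewrite ev2_XX addn0 => G; apply: G.
Qed.

Lemma homc_hom (psi : coch) : homc psi -> homogeneous 0 psi.
Proof. move=> H a b x y Hx Hy; apply: (ev2_grade (a:=a) (b:=b)) => //; by rewrite addn0. Qed.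

Lemma Z_lin (psi psi' : coch) a : in_Z2_0 phi psi -> in_Z2_0 phi psi' ->
  in_Z2_0 phi (a *: psi + psi').
Proof.
move=> [A1 H1 C1] [A2 H2 C2]; split.
- by move=> x; rewrite ev2P A1 A2 scaler0 addr0.
- apply: homc_hom => i j m Hm.
  by rewrite !ffunE mxE [_ 0 m]mxE (hom_homc H1) // (hom_homc H2) // mulr0 addr0.
- by move=> x y z; rewrite d2P C1 C2 scaler0 addr0.
Qed.

Lemma Z_0 : in_Z2_0 phi 0.
Proof.
split.
- by move=> x; rewrite /ev2 big1 // => i _; rewrite big1 // => j _; rewrite ffunE scaler0.
- by apply: homc_hom => i j m Hm; rewrite ffunE mxE.
- move=> x y z; have E := d2P 0 0 1 x y z; rewrite !scale1r addr0 in E.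
  by apply: (addrI (d2 phi 0 x y z)); rewrite addr0 -E.
Qed.

Definition Aij (c : C) (Mf : nat -> nat -> C) (u l : 'I_n) : C :=
  if (2 <= u)%N && (2 <= l)%N then
    (if ((u:nat) == l) && odd u then c - Mf u.-1 u.-1 else Mf u l) else 0.
Definition ispair (u w : nat) : bool := ~~ odd u && (w == u.+1).
Definition bet (c : C) (Mf : nat -> nat -> C) (u w : 'I_n) : C :=
  if ispair u w then Mf w w else
  ((\sum_l Aij c Mf u l * om w l) - (\sum_l Aij c Mf w l * om u l) + c * om u w)
    / (1 + lam u + lam w).
Definition fl (c : C) (Mf : nat -> nat -> C) (i j : 'I_n) : vec :=
  if (i == 0 :> nat) then (if (j == 1 :> nat) then (-c) *: X C i0 else 0)
  else if (i == 1 :> nat) then \row_l Aij c Mf j l else bet c Mf i j *: X C i0.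
Definition gpsi (c : C) (Mf : nat -> nat -> C) : coch := [ffun ij : 'I_n * 'I_n =>
  if (ij.1 < ij.2)%N then fl c Mf ij.1 ij.2
  else if (ij.2 < ij.1)%N then - fl c Mf ij.2 ij.1 else 0].

Lemma gpsi_antis c Mf : antis (gpsi c Mf).
Proof. move=> i j; rewrite !ffunE /=; case: ltngtP => //; by rewrite ?opprK ?oppr0. Qed.

Lemma fl_hom c Mf (i j m : 'I_n) : (i < j)%N -> degX m != (degX i + degX j)%N ->
  fl c Mf i j 0 m = 0.
Proof.
rewrite /fl; have [->|[->|Hi]] := ord_cases i => ij Hm /=.
- case: ifP => j1; last by rewrite mxE.
  rewrite scX_coord; case: (eqVneq i0 m) => [Em|]; last by rewrite /= mulr0.
  by move: Hm; rewrite -Em /degX (eqP j1).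
- rewrite mxE /Aij; case: ifP => // /andP [_ Hm2].
  by move: Hm; rewrite degX1 (degX2 Hm2) (degX2 ij) eqxx.
- have -> : (i == 0 :> nat) = false by apply/eqP; lia.
  have -> : (i == 1 :> nat) = false by apply/eqP; lia.
  rewrite scX_coord; case: (eqVneq i0 m) => [Em|]; last by rewrite /= mulr0.
  by move: Hm; rewrite -Em degX0 (degX2 Hi) (degX2 (leq_trans Hi (ltnW ij))).
Qed.

Lemma gpsi_homc c Mf : homc (gpsi c Mf).
Proof.
move=> i j m Hm; rewrite ffunE /=; case: ltngtP => ij.
- exact: fl_hom.
- by rewrite mxE fl_hom ?oppr0 //; rewrite addnC.
- by rewrite mxE.
Qed.

Lemma gpsi_uw c Mf (u w : 'I_n) : (2 <= u)%N -> (u < w)%N ->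
  gpsi c Mf (u, w) = bet c Mf u w *: X C i0 /\ gpsi c Mf (w, u) = - (bet c Mf u w *: X C i0).
Proof.
move=> Hu uw; rewrite !ffunE /= uw ltnNge (ltnW uw) /= /fl.
have -> : (u == 0 :> nat) = false by apply/eqP; lia.
by have -> : (u == 1 :> nat) = false by apply/eqP; lia.
Qed.

Lemma gpsi_1w c Mf (w l : 'I_n) : (2 <= w)%N -> gpsi c Mf (i1, w) 0 l = Aij c Mf w l.
Proof. by move=> Hw; rewrite ffunE /= Hw /fl /= mxE. Qed.

Lemma gpsi_01 c Mf : gpsi c Mf (i0, i1) = (- c) *: X C i0.
Proof. by rewrite ffunE /= /fl. Qed.

Lemma gpsi_d2 c Mf (u w : 'I_n) : (2 <= u)%N -> (u < w)%N ->
  d2 phi (gpsi c Mf) (X C i1) (X C u) (X C w) 0 i0 =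
  ((\sum_l Aij c Mf u l * om w l) - (\sum_l Aij c Mf w l * om u l) + c * om u w)
  - bet c Mf u w * (1 + lam u + lam w).
Proof.
move=> Hu uw; have Hw : (2 <= w)%N by lia.
rewrite d2_formula //; have [E1 E2] := gpsi_uw c Mf Hu uw.
rewrite E1 E2 gpsi_01 !mxE !eqxx /= mulr1.
have S : forall a b : 'I_n, (2 <= b)%N ->
  \sum_l gpsi c Mf (i1, b) 0 l * om a l = \sum_l Aij c Mf b l * om a l.
  by move=> a b Hb; apply: eq_bigr => l _; rewrite gpsi_1w.
rewrite !S //; ring.
Qed.


Lemma sum_ind (F : 'I_n -> C) (k : 'I_n) : \sum_l F l * ((l:nat) == k)%:R = F k.
Proof.
rewrite (bigD1 k) //= eqxx mulr1 big1 ?addr0 // => l nl.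
have -> : ((l:nat) == k) = false by exact: (negbTE nl).
by rewrite mulr0.
Qed.

Lemma pair_half (u w : nat) : ispair u w -> w./2 = u./2 /\ odd w.
Proof.
move=> /andP [Ou /eqP ->]; split; last by rewrite /= Ou.
rewrite /= -{1}(odd_double_half u) (negbTE Ou) add0n uphalf_double //.
Qed.

Lemma pair_eig (u w : nat) : ispair u w -> 1 + lam u + lam w = 0.
Proof.
move=> P; have [h Ow] := pair_half P; move/andP: P => [Ou _].
by rewrite /lam Ow (negbTE Ou) h; ring.
Qed.

Lemma pair_sum c Mf (u w : 'I_n) : (2 <= u)%N -> ispair u w ->
  (\sum_l Aij c Mf u l * om w l) - (\sum_l Aij c Mf w l * om u l) + c * om u w = 0.
Proof.
move=> Hu P; have [_ Ow] := pair_half P; move/andP: (P) => [Ou /eqP Ew].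
have E1 : forall l, om w l = - ((l:nat) == u)%:R by move=> l; rewrite /om Ow Ew.
have E2 : forall l, om u l = ((l:nat) == w)%:R by move=> l; rewrite /om (negbTE Ou) Ew.
under eq_bigr => l _ do rewrite E1 mulrN.
under [X in _ - X + _]eq_bigr => l _ do rewrite E2.
rewrite sumrN !sum_ind E2 eqxx mulr1.
have Hw : (2 <= w)%N by lia.
rewrite /Aij Hu Hw eqxx /= (negbTE Ou) Ow Ew /= eqxx /=; ring.
Qed.

Lemma phinE (k : nat) (H : (k.-1 < p.-1)%N) : phin phi k = phi (Ordinal H).
Proof.
rewrite /phin; case: insubP => [i _ Ei|]; last by rewrite H.
by congr phi; apply/val_inj.
Qed.

Lemma eig_nz (u w : 'I_n) : notin_Omega phi -> (2 <= u)%N -> (u < w)%N ->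
  ~~ ispair u w -> 1 + lam u + lam w != 0.
Proof.
move=> [O1 [_ [O3 _]]] Hu uw NP.
have hu := odd_double_half u; have hw := odd_double_half w.
rewrite -muln2 in hu; rewrite -muln2 in hw.
have Hun : ((u:nat) < (2 * (p - 1)).+2)%N by rewrite subn1; exact: ltn_ord u.
have Hwn : ((w:nat) < (2 * (p - 1)).+2)%N by rewrite subn1; exact: ltn_ord w.
have Ha : ((u:nat)./2.-1 < p.-1)%N.
  by rewrite -!subn1; case: (odd u) hu => /= hu; lia.
have Hb : ((w:nat)./2.-1 < p.-1)%N.
  by rewrite -!subn1; case: (odd w) hw => /= hw; lia.
rewrite /lam !(phinE Ha) !(phinE Hb).
set i := Ordinal Ha; set j := Ordinal Hb.
have Nij : ~~ ((odd u && odd w) || (~~ odd u && ~~ odd w)) -> i != j.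
  move=> H; apply/eqP => /(congr1 val) /= E.
  move: NP H; rewrite /ispair; case: (odd u) hu => /= hu; case: (odd w) hw => /= hw //.
  - move=> _ _; lia.
  - move=> NP _; move: NP; have -> : (w:nat) = u.+1 by lia.
    by rewrite eqxx.
case Ou: (odd u); case Ow: (odd w).
- have -> : 1 - (1 + phi i) - (1 + phi j) = - (1 + phi i + phi j) by ring.
  by rewrite oppr_eq0.
- have -> : 1 - (1 + phi i) + phi j = phi j - phi i by ring.
  by apply: O3; rewrite eq_sym; apply: Nij; rewrite Ou Ow.
- have -> : 1 + phi i - (1 + phi j) = phi i - phi j by ring.
  by apply: O3; apply: Nij; rewrite Ou Ow.
- exact: O1.
Qed.

Lemma gpsi_Z c Mf : notin_Omega phi -> in_Z2_0 phi (gpsi c Mf).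
Proof.
move=> HO; split.
- exact: antis_alt (@gpsi_antis c Mf).
- exact: homc_hom (@gpsi_homc c Mf).
- apply: cocycle_crit; [exact: gpsi_antis|exact: gpsi_homc|] => u w Hu uw.
  rewrite gpsi_d2 //; case: (boolP (ispair u w)) => P.
  + by rewrite pair_sum // pair_eig // mulr0 subr0.
  + by rewrite /bet (negbTE P) mulfVK ?subrr //; apply: eig_nz.
Qed.


Local Notation m2 := (2 * p.-1)%N.
Definition ee (a : 'I_m2) : 'I_n := @Ordinal n a.+2 (ltn_ord a).
Definition em (a : 'I_m2) : 'I_n := @Ordinal n a.+1 (ltnW (ltn_ord a)).
Local Notation Idx := (option ('I_m2 * 'I_m2)).

Definition spec (a b : 'I_m2) : bool := (a == b) && odd a.
Definition pos (k : Idx) : 'I_n * 'I_n :=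
  match k with None => (i1, i0)
  | Some (a, b) => if spec a b then (em a, ee a) else (i1, ee a) end.
Definition crd (k : Idx) : 'I_n :=
  match k with None => i0
  | Some (a, b) => if spec a b then i0 else ee b end.
Definition rho (psi : coch) (k : Idx) : C := psi (pos k) 0 (crd k).

Lemma rho_lin (psi psi' : coch) a k : rho (a *: psi + psi') k = a * rho psi k + rho psi' k.
Proof. by rewrite /rho !ffunE !mxE. Qed.

Lemma rho_sum (I : finType) (F : I -> coch) k : rho (\sum_i F i) k = \sum_i rho (F i) k.
Proof. by rewrite /rho sum_ffunE summxE. Qed.

Lemma ee_surj (u : 'I_n) : (2 <= u)%N -> {a : 'I_m2 | ee a = u}.
Proof.
move=> Hu; have Hl : ((u:nat) - 2 < m2)%N.
  have := ltn_ord u; move: (u:nat) Hu => x; rewrite /dimF; move: (p.-1) => q; lia.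
by exists (Ordinal Hl); apply/val_inj => /=; lia.
Qed.

Lemma rho_gpsi c Mf k :
  rho (gpsi c Mf) k = match k with None => c | Some (a, b) => Mf a.+2 b.+2 end.
Proof.
case: k => [[a b]|]; rewrite /rho /=.
- case Sp: (spec a b) => /=.
  + move: Sp => /andP [/eqP <- Oa].
    have Hu : (2 <= em a)%N by rewrite /=; case: (a : nat) Oa.
    have [E1 _] := gpsi_uw c Mf Hu (ltnSn _ : (em a < ee a)%N).
    rewrite E1 scX_coord eqxx mulr1 /bet.
    by have -> : ispair (em a) (ee a) by rewrite /ispair /= Oa eqxx.
  + rewrite gpsi_1w // /Aij /= negbK eqSS.
    by have -> : (((a:nat) == b) && odd a) = false by exact: Sp.
- by rewrite ffunE /= /fl /= mxE scX_coord eqxx mulr1 opprK.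
Qed.

Lemma inj_Z (psi : coch) : notin_Omega phi -> in_Z2_0 phi psi ->
  (forall k, rho psi k = 0) -> psi = 0.
Proof.
move=> HO [Alt Hom Coc] Hr.
have Ha := alt_antis Alt; have Hh := hom_homc Hom.
have Hd : forall i, psi (i, i) = 0 by move=> i; apply: vec_selfneg; rewrite {1}Ha.
have c0 : psi (i1, i0) 0 i0 = 0 by exact: (Hr None).
have c0' : psi (i0, i1) 0 i0 = 0 by rewrite Ha mxE c0 oppr0.
have A0ns : forall a b, ~~ spec a b -> psi (i1, ee a) 0 (ee b) = 0.
  by move=> a b Sp; have := Hr (Some (a, b)); rewrite /rho /= (negbTE Sp).
have Aall : forall (w l : 'I_n), (2 <= w)%N -> psi (i1, w) 0 l = 0.
  move=> w l Hw.
  have [El|[El|Hl]] := ord_cases l.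
  - by rewrite El Hh // degX0 degX1 (degX2 Hw).
  - by rewrite El Hh // degX1 (degX2 Hw).
  have [a Ea] := ee_surj Hw; have [b Eb] := ee_surj Hl.
  rewrite -Ea -Eb; case Sp: (spec a b); last by apply: A0ns; rewrite Sp.
  move: Sp => /andP [/eqP <- Oa].
  have Hu : (2 <= em a)%N by rewrite /=; case: (a : nat) Oa.
  have Eq := Coc (X C i1) (X C (em a)) (X C (ee a)).
  have := congr1 (fun v : vec => v 0 i0) Eq; rewrite [RHS]mxE d2_formula //.
  have h1 : psi (em a, ee a) 0 i0 = 0.
    have := Hr (Some (a, a)); rewrite /rho /= /spec eqxx Oa //.
  have h2 : psi (ee a, em a) 0 i0 = 0 by rewrite Ha mxE h1 oppr0.
  have h3 : \sum_l psi (i1, em a) 0 l * om (ee a) l = 0.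
    apply: big1 => l' _.
    have [Hl0|[Hl1|Hl2]] := ord_cases l'.
    - by rewrite Hl0 Hh ?mul0r // degX0 degX1 (degX2 Hu).
    - by rewrite Hl1 Hh ?mul0r // degX1 (degX2 Hu).
    have [b' Eb'] := ee_surj Hl2; have [a' Ea'] := ee_surj Hu.
    rewrite -Eb' -Ea' A0ns ?mul0r //.
    apply/negP => /andP [_ Oa2]; move: Oa.
    have : ((a':nat).+2 = (a:nat).+1)%N by move/(congr1 val): Ea'.
    move=> E; have -> : (a:nat) = (a':nat).+1 by lia.
    by rewrite /= Oa2.
  have h4 : \sum_l psi (i1, ee a) 0 l * om (em a) l = psi (i1, ee a) 0 (ee a).
    by rewrite -sum_ind; apply: eq_bigr => l' _; rewrite /om /= Oa.
  rewrite h1 h2 h3 h4 c0' => E.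
  have : - psi (i1, ee a) 0 (ee a) = 0 by rewrite -E; ring.
  by move/eqP; rewrite oppr_eq0 => /eqP.
have B0 : forall u w : 'I_n, (2 <= u)%N -> (u < w)%N -> psi (u, w) 0 i0 = 0.
  move=> u w Hu uw; have Hw : (2 <= w)%N by lia.
  case: (boolP (ispair u w)) => P.
    have [b Eb] := ee_surj Hw.
    have := Hr (Some (b, b)); rewrite /rho /= /spec eqxx /=.
    have [_ Ow] := pair_half P; move/andP: P => [_ /eqP Ew].
    have Ob : odd b by move: Ow; rewrite -Eb /= negbK.
    rewrite Ob /=.
    have -> : em b = u by apply/val_inj; move/(congr1 val): Eb => /= Eb'; lia.
    by rewrite Eb.
  have Eq := Coc (X C i1) (X C u) (X C w).
  have := congr1 (fun v : vec => v 0 i0) Eq; rewrite [RHS]mxE d2_formula //.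
  have hS : forall (a : nat) (b : 'I_n), (2 <= b)%N -> \sum_l psi (i1, b) 0 l * om a l = 0.
    by move=> a b Hb; apply: big1 => l _; rewrite Aall ?mul0r.
  have hwu : psi (w, u) 0 i0 = - psi (u, w) 0 i0 by rewrite Ha mxE.
  rewrite c0' !hS // hwu => E.
  have : (1 + lam u + lam w) * psi (u, w) 0 i0 = 0.
    transitivity (- (- psi (u, w) 0 i0 - 0 + 0 - lam u * psi (u, w) 0 i0 +
      lam w * - psi (u, w) 0 i0 - om u w * 0)); first ring.
    by rewrite E oppr0.
  by move/eqP; rewrite mulf_eq0 (negbTE (eig_nz HO Hu uw P)) /= => /eqP.
have Lt : forall i j : 'I_n, (i < j)%N -> psi (i, j) = 0.
  move=> i j ij; apply/rowP => m; rewrite [RHS]mxE.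
  have [Ei|[Ei|Hi]] := ord_cases i.
  - rewrite Ei; have [Ej|[Ej|Hj]] := ord_cases j.
    + by move: ij; rewrite Ei Ej.
    + rewrite Ej; have [Em|[Em|Hm]] := ord_cases m.
      * by rewrite Em.
      * by rewrite Em Hh.
      * by rewrite Hh // degX0 degX1 (degX2 Hm).
    + by rewrite Hh //; apply/negP => /eqP E; move: (degX_le m); rewrite E degX0 (degX2 Hj).
  - have Hj : (2 <= j)%N by move: ij; rewrite Ei /=; lia.
    rewrite Ei; have [Em|[Em|Hm]] := ord_cases m.
    + by rewrite Em Hh // degX0 degX1 (degX2 Hj).
    + by rewrite Em Hh // degX1 (degX2 Hj).
    + exact: Aall.
  - have Hj : (2 <= j)%N by lia.
    have [Em|[Em|Hm]] := ord_cases m.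
    + by rewrite Em; apply: B0.
    + by rewrite Em Hh // degX1 (degX2 Hi) (degX2 Hj).
    + by rewrite Hh // (degX2 Hm) (degX2 Hi) (degX2 Hj).
apply/ffunP => [[i j]]; rewrite ffunE.
case: (ltngtP i j) => [ij|ji|/val_inj ->].
- exact: Lt.
- by rewrite Ha Lt // oppr0.
- exact: Hd.
Qed.



Lemma Z_sum (I : finType) (F : I -> coch) (a : I -> C) :
  (forall i, in_Z2_0 phi (F i)) -> in_Z2_0 phi (\sum_i a i *: F i).
Proof.
move=> H; apply: (big_ind (fun v => in_Z2_0 phi v)).
- exact: Z_0.
- by move=> x y Hx Hy; have := Z_lin 1 Hx Hy; rewrite scale1r.
- by move=> i _; have := Z_lin (a i) (H i) Z_0; rewrite addr0.
Qed.

Definition cI (k : Idx) : C := if k is None then 1 else 0.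
Definition MI (k : Idx) : nat -> nat -> C := fun u l =>
  if k is Some (a, b) then ((u == a.+2) && (l == b.+2))%:R else 0.
Definition G (k : Idx) : coch := gpsi (cI k) (MI k).

Lemma rhoZ (psi : coch) a k : rho (a *: psi) k = a * rho psi k.
Proof. by rewrite /rho !ffunE !mxE. Qed.
Lemma rho0 k : rho 0 k = 0.
Proof. by rewrite /rho !ffunE !mxE. Qed.

Lemma rhoG k k' : rho (G k) k' = (k == k')%:R.
Proof.
rewrite /G rho_gpsi.
case: k => [[a b]|]; case: k' => [[a' b']|] //=.
rewrite !eqSS.
have -> : ((a':nat) == a) && ((b':nat) == b) = (Some (a, b) == Some (a', b')).
  apply/idP/idP => [/andP [/eqP E1 /eqP E2]|/eqP [-> ->]]; last by rewrite !eqxx.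
  by apply/eqP; congr Some; congr pair; apply/val_inj.
by [].
Qed.

Lemma main_gen : (1 < p)%N -> notin_Omega phi ->
  exists U : {vspace coch},
    (forall psi : coch, psi \in U <-> in_Z2_0 phi psi) /\
    \dim U = (4 * p ^ 2 + 5 - 8 * p)%N.
Proof.
move=> Hp HO.
pose N := #|{: Idx}|.
pose Gk (k : 'I_N) := G (enum_val k).
pose T := [tuple Gk k | k < N].
have TG : forall k : 'I_N, T`_k = Gk k by move=> k; rewrite nth_mktuple.
have GZ : forall k, in_Z2_0 phi (Gk k) by move=> k; apply: gpsi_Z.
have rhoGk : forall (k : 'I_N) j, rho (Gk k) j = (enum_val k == j)%:R.
  by move=> k j; rewrite rhoG.
have sumI : forall (f : 'I_N -> C) j, \sum_(k < N) f k * (enum_val k == j)%:R = f (enum_rank j).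
  move=> f j; rewrite (bigD1 (enum_rank j)) //= enum_rankK eqxx mulr1 big1 ?addr0 //.
  move=> k nk; have -> : (enum_val k == j) = false; last by rewrite mulr0.
  by apply/eqP => E; move: nk; rewrite -E enum_valK eqxx.
exists <<T>>%VS; split.
- move=> psi; split.
  + move/coord_span => ->; apply: Z_sum => k; rewrite TG; exact: GZ.
  + move=> Hz.
    pose S := \sum_(k < N) rho psi (enum_val k) *: Gk k.
    have SZ : in_Z2_0 phi S by apply: Z_sum.
    have E0 : (-1) *: S + psi = 0.
      apply: inj_Z => //; first exact: Z_lin.
      move=> j; rewrite rho_lin rho_sum.
      under eq_bigr => k _ do rewrite rhoZ rhoGk.
      by rewrite sumI enum_rankK; ring.
    have -> : psi = S by move/eqP: E0; rewrite scaleN1r addrC subr_eq0 => /eqP.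
    apply: memv_suml => k _; apply: memvZ; apply: memv_span.
    by rewrite -TG; apply: mem_nth; rewrite size_tuple.
- have HT : free T.
    apply/freeP => c Hc k.
    have := congr1 (fun v => rho v (enum_val k)) Hc; rewrite /= rho_sum rho0.
    under eq_bigr => j _ do rewrite TG rhoZ rhoGk.
    by rewrite sumI enum_valK.
  rewrite (eqP HT) size_tuple /N card_option card_prod card_ord.
  have hp : p = (p.-1).+1 by lia.
  move: (p.-1) hp => q ->.
  rewrite !expnS expn0 muln1; nia.
Qed.

End Gen.

Local Open Scope complex_scope.

Theorem lemma5 (R : realType) (p : nat) (phi : 'I_p.-1 -> R[i]) :
  (2 <= p)%N -> notin_Omega phi ->
  exists U : {vspace cochain2 R[i] p},
    (forall psi : cochain2 R[i] p, psi \in U <-> in_Z2_0 phi psi) /\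
    \dim U = (4 * p ^ 2 + 5 - 8 * p)%N.
Proof. move=> Hp HO; exact: (main_gen Hp HO). Qed.
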